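(* For every formula $A$ of $\mathbf{L_1}$ the following are equivalent: (i) $\vdash_T A$; (ii) $\vdash_H A$; (iii) $TA$ is valid in first-order predicate logic with equality; (iv) it is not the case that $\dashv_H A$.
   Context: Formulas of $\mathbf{L_1}$: built from atomic formulas $\epsilon ab$, where $a,b$ range over a countably infinite list of name variables (possibly equal), using the primitive connectives $\vee$ and $\sim$; $\wedge,\supset,\equiv$ are defined from these as usual. Disjunctions $A_1\vee\cdots\vee A_n$ may be associated in any way. Hilbert-type $\mathbf{L_1}$: $\vdash_H A$ means $A$ belongs to the smallest set of formulas of $\mathbf{L_1}$ containing all instances of classical propositional tautologies and all formulas $\epsilon ab\supset\epsilon aa$, $(\epsilon ab\wedge\epsilon bc)\supset\epsilon ac$, $(\epsilon ab\wedge\epsilon bb)\supset\epsilon ba$ (for arbitrary name variables $a,b,c$), and closed under modus ponens. Positive/negative parts (occurrences of subformulas): $A$ is a positive part of $A$; if $B\vee C$ is a positive part of $A$ then $B$ and $C$ are positive parts of $A$; if $\sim B$ is a positive part of $A$ then $B$ is a negative part of $A$; if $\sim B$ is a negative part of $A$ then $B$ is a positive part of $A$. $F[B_+]$ (resp. $G[B_-]$) denotes a formula with a specified occurrence of $B$ as a positive (resp. negative) part; $F[B_+,C_-]$, $G[B_-,C_-]$ etc. denote formulas with specified non-overlapping such occurrences. Tableaux: the reduction rules are ($\vee_-$) from $G[B\vee C_-]$ produce two branches $G[B\vee C_-]\vee\sim B$ and $G[B\vee C_-]\vee\sim C$; ($\epsilon_1$) from $G[\epsilon ab_-]$ produce $G[\epsilon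 ab_-]\vee\sim\epsilon aa$; ($\epsilon_2$) from $G[\epsilon ab_-,\epsilon bc_-]$ produce $G[\epsilon ab_-,\epsilon bc_-]\vee\sim\epsilon ac$; ($\epsilon_{3b}$) from $G[\epsilon ab_-,\epsilon bb_-]$ produce $G[\epsilon ab_-,\epsilon bb_-]\vee\sim\epsilon ba$. A tableau for $A$ is a finite tree of formulas with root $A$ in which the children of each non-leaf node are obtained from it by one reduction rule. A branch is closed if its last formula has the form $F[B_+,B_-]$ (some formula $B$ has one occurrence as a positive part and another as a negative part); a tableau is closed if all its branches are closed. $\vdash_T A$ means that $A$ has a closed tableau. Hintikka formula: a formula $H$ such that (1) $H$ is not of the form $F[B_+,B_-]$; (2) if $B\vee C$ is a negative part of $H$ then $B$ or $C$ is a negative part of $H$; (3) if $\epsilon ab$ is a negative part of $H$ then so is $\epsilon aa$; (4) if $\epsilon ab$ and $\epsilon bc$ are negative parts of $H$ then so is $\epsilon ac$; (5) if $\epsilon ab$ and $\epsilon bb$ are negative parts of $H$ then so is $\epsilon ba$. Hilbert-type axiomatic rejection $\mathbf{HAR}$: fix a name variable $a_0$. $\dashv_H$ is the smallest set of formulas such that: $\dashv_H\epsilon a_0a_0$; $\dashv_H\sim\epsilon a_0a_0$; if $\vdash_H A\supset B$ and $\dashv_H B$ then $\dashv_H A$; if $\dashv_H A$ and $A$ is obtained from $B$ by a uniform substitution of name variables for name variables, then $\dashv_H B$; if $A$ is a Hintikka formula which is a disjunction all of whose disjuncts are atomic or negated atomic formulas, $\dashv_H A$, and $\epsilon ab$ does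 not occur in $A$ as a negative part, then $\dashv_H A\vee\epsilon ab$. Translation $T$ into first-order logic with equality, with a monadic predicate $F_a$ for each name variable $a$: $T\epsilon ab=\exists x(F_ax\wedge F_bx)\wedge\forall x\forall y(F_ax\wedge F_ay\supset x=y)$; $T(A\vee B)=TA\vee TB$; $T(\sim A)=\sim TA$. ''Valid in first-order predicate logic with equality'' means true in every first-order structure (nonempty domain, $=$ interpreted as identity, arbitrary interpretation of the $F_a$). *)

(* Defs.v *)
From Stdlib Require Import List.
Import ListNotations.

Definition name := nat.

Inductive form : Type :=
| Eps : name -> name -> form
| Or  : form -> form -> form
| Not : form -> form.

Definition Imp (A B : form) : form := Or (Not A) B.
Definition And (A B : form) : form := Not (Or (Not A) (Not B)).
Definition Iff (A B : form) : form := And (Imp A B) (Imp B A).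

(* occ_in A s p B t : starting at the root A with polarity s (true = positive),
   following the path p one reaches an occurrence of B with polarity t.
   Path components: 0 = left disjunct / argument of ~, 1 = right disjunct.
   Following the definition, one descends into B \/ C only when it is positive. *)
Inductive occ_in : form -> bool -> list nat -> form -> bool -> Prop :=
| occ_here : forall A s, occ_in A s [] A s
| occ_orl : forall B C q D t,
    occ_in B true q D t -> occ_in (Or B C) true (0 :: q) D t
| occ_orr : forall B C q D t,
    occ_in C true q D t -> occ_in (Or B C) true (1 :: q) D t
| occ_not : forall B s q D t,
    occ_in B (negb s) q D t -> occ_in (Not B) s (0 :: q) D t.

Definition pos_occ (A : form) (p : list nat) (B : form) : Prop := occ_in A true p B true.
Definition neg_occ (A : form) (p : list nat) (B : form) : Prop := occ_in A true p B false.

Definition pos_part (A B : form) : Prop := exists p, pos_occ A p B.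
Definition neg_part (A B : form) : Prop := exists p, neg_occ A p B.

Definition prefix (p q : list nat) : Prop := exists r, q = p ++ r.
Definition nonoverlap (p q : list nat) : Prop := ~ prefix p q /\ ~ prefix q p.

(* A has the form F[B+, B-] for some formula B *)
Definition closed_form (A : form) : Prop :=
  exists B p q, pos_occ A p B /\ neg_occ A q B /\ nonoverlap p q.

Inductive has_closed_tableau : form -> Prop :=
| tab_leaf : forall G, closed_form G -> has_closed_tableau G
| tab_or : forall G p B C,
    neg_occ G p (Or B C) ->
    has_closed_tableau (Or G (Not B)) ->
    has_closed_tableau (Or G (Not C)) ->
    has_closed_tableau G
| tab_eps1 : forall G p a b,
    neg_occ G p (Eps a b) ->
    has_closed_tableau (Or G (Not (Eps a a))) ->
    has_closed_tableau G
| tab_eps2 : forall G p q a b c,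
    neg_occ G p (Eps a b) -> neg_occ G q (Eps b c) -> nonoverlap p q ->
    has_closed_tableau (Or G (Not (Eps a c))) ->
    has_closed_tableau G
| tab_eps3b : forall G p q a b,
    neg_occ G p (Eps a b) -> neg_occ G q (Eps b b) -> nonoverlap p q ->
    has_closed_tableau (Or G (Not (Eps b a))) ->
    has_closed_tableau G.

Definition T_provable (A : form) : Prop := has_closed_tableau A.

Inductive pform : Type :=
| PVar : nat -> pform
| POr  : pform -> pform -> pform
| PNot : pform -> pform.

Fixpoint peval (v : nat -> bool) (P : pform) : bool :=
  match P with
  | PVar n => v n
  | POr P Q => orb (peval v P) (peval v Q)
  | PNot P => negb (peval v P)
  end.

Definition ptautology (P : pform) : Prop := forall v, peval v P = true.

Fixpoint pinst (s : nat -> form) (P : pform) : form :=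
  match P with
  | PVar n => s n
  | POr P Q => Or (pinst s P) (pinst s Q)
  | PNot P => Not (pinst s P)
  end.

Definition taut_instance (A : form) : Prop :=
  exists P s, ptautology P /\ A = pinst s P.

Inductive H_provable : form -> Prop :=
| H_taut : forall A, taut_instance A -> H_provable A
| H_ax1 : forall a b, H_provable (Imp (Eps a b) (Eps a a))
| H_ax2 : forall a b c, H_provable (Imp (And (Eps a b) (Eps b c)) (Eps a c))
| H_ax3 : forall a b, H_provable (Imp (And (Eps a b) (Eps b b)) (Eps b a))
| H_mp : forall A B, H_provable (Imp A B) -> H_provable A -> H_provable B.

(* Truth of the translated sentence TA in the structure with domain D and
   interpretation F a of the monadic predicate F_a (equality = identity). *)
Fixpoint Tsat (D : Type) (F : name -> D -> Prop) (A : form) : Prop :=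
  match A with
  | Eps a b => (exists x, F a x /\ F b x) /\
               (forall x y, F a x /\ F a y -> x = y)
  | Or A B => Tsat D F A \/ Tsat D F B
  | Not A => ~ Tsat D F A
  end.

(* TA is valid: true in every structure (nonempty domain) *)
Definition T_valid (A : form) : Prop :=
  forall (D : Type) (d : D) (F : name -> D -> Prop), Tsat D F A.

Definition hintikka (H : form) : Prop :=
  ~ closed_form H /\
  (forall B C, neg_part H (Or B C) -> neg_part H B \/ neg_part H C) /\
  (forall a b, neg_part H (Eps a b) -> neg_part H (Eps a a)) /\
  (forall a b c, neg_part H (Eps a b) -> neg_part H (Eps b c) -> neg_part H (Eps a c)) /\
  (forall a b, neg_part H (Eps a b) -> neg_part H (Eps b b) -> neg_part H (Eps b a)).

Inductive literal_disj : form -> Prop :=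
| ld_atom : forall a b, literal_disj (Eps a b)
| ld_natom : forall a b, literal_disj (Not (Eps a b))
| ld_or : forall A B, literal_disj A -> literal_disj B -> literal_disj (Or A B).

Fixpoint nsubst (s : name -> name) (A : form) : form :=
  match A with
  | Eps a b => Eps (s a) (s b)
  | Or A B => Or (nsubst s A) (nsubst s B)
  | Not A => Not (nsubst s A)
  end.

Inductive H_rejected (a0 : name) : form -> Prop :=
| R_ax1 : H_rejected a0 (Eps a0 a0)
| R_ax2 : H_rejected a0 (Not (Eps a0 a0))
| R_mp : forall A B, H_provable (Imp A B) -> H_rejected a0 B -> H_rejected a0 A
| R_subst : forall A B s, H_rejected a0 A -> A = nsubst s B -> H_rejected a0 B
| R_hint : forall A a b,
    hintikka A -> literal_disj A -> H_rejected a0 A ->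
    ~ neg_part A (Eps a b) -> H_rejected a0 (Or A (Eps a b)).

(* Main.v *)
Require Import Defs.
From Stdlib Require Import List Bool Arith Lia Classical ClassicalEpsilon FunctionalExtensionality PropExtensionality Cantor.
Import ListNotations.

Lemma occ_app : forall A s p X t, occ_in A s p X t ->
  forall q Y u, occ_in X t q Y u -> occ_in A s (p ++ q) Y u.
Proof.
  intros A s p X t H; induction H; intros; simpl; try constructor; auto.
Qed.

Lemma occ_split : forall p A s q Y u, occ_in A s (p ++ q) Y u ->
  exists X t, occ_in A s p X t /\ occ_in X t q Y u.
Proof.
  induction p; intros A s q Y u H; simpl in *.
  - exists A, s; split; [constructor|auto].
  - inversion H; subst;
    match goal with Hx : occ_in _ _ (p ++ q) _ _ |- _ =>
      destruct (IHp _ _ _ _ _ Hx) as (X & t & H1 & H2); exists X, t; split; auto; constructor; auto end.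
Qed.

Lemma occ_det : forall A s p X t, occ_in A s p X t ->
  forall Y u, occ_in A s p Y u -> X = Y /\ t = u.
Proof.
  intros A s p X t H; induction H; intros Y u H'; inversion H'; subst; auto.
Qed.

Lemma occ_eps : forall a b t r Y u, occ_in (Eps a b) t r Y u -> r = [] /\ Y = Eps a b /\ u = t.
Proof. intros. inversion H; subst; auto. Qed.

Lemma atom_prefix : forall G p a b t r Y u,
  occ_in G true p (Eps a b) t -> occ_in G true (p ++ r) Y u -> r = [] /\ Y = Eps a b /\ u = t.
Proof.
  intros. destruct (occ_split _ _ _ _ _ _ H0) as (X & t' & H1 & H2).
  destruct (occ_det _ _ _ _ _ H _ _ H1); subst. apply occ_eps in H2; auto.
Qed.

Lemma atom_nonoverlap : forall G p q a b c d t u,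
  occ_in G true p (Eps a b) t -> occ_in G true q (Eps c d) u ->
  (Eps a b <> Eps c d \/ t <> u) -> nonoverlap p q.
Proof.
  intros. split; intros [r Hr]; subst.
  - destruct (atom_prefix _ _ _ _ _ _ _ _ H H0) as (? & ? & ?). destruct H1; auto.
  - destruct (atom_prefix _ _ _ _ _ _ _ _ H0 H) as (? & ? & ?). destruct H1; auto.
Qed.

Lemma occ_or_inv : forall G Y p X t, occ_in (Or G Y) true p X t ->
  (p = [] /\ X = Or G Y /\ t = true) \/
  (exists p', occ_in G true p' X t) \/ (exists p', occ_in Y true p' X t).
Proof. intros. inversion H; subst; eauto 6. Qed.

Fixpoint subs (A : form) : list form :=
  A :: match A with Or B C => subs B ++ subs C | Not B => subs B | Eps _ _ => [] end.

Lemma subs_refl : forall A, In A (subs A).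
Proof. destruct A; simpl; auto. Qed.

Lemma subs_trans : forall X Y Z, In Y (subs X) -> In Z (subs Y) -> In Z (subs X).
Proof.
  induction X; simpl; intros Y Z H1 H2.
  - destruct H1 as [<-|[]]; auto.
  - destruct H1 as [<-|H1]; auto. right. apply in_app_or in H1; apply in_or_app.
    destruct H1; eauto.
  - destruct H1 as [<-|H1]; eauto.
Qed.

Lemma occ_sub : forall A s p X t, occ_in A s p X t -> In X (subs A).
Proof.
  intros A s p X t H; induction H; simpl; auto using subs_refl.
  - right; apply in_or_app; auto.
  - right; apply in_or_app; auto.
Qed.

Definition holds (D : Type) (F : name -> D -> Prop) (s : bool) (A : form) : Prop :=
  if s then Tsat D F A else ~ Tsat D F A.

Lemma occ_sem : forall A s p X t, occ_in A s p X t ->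
  forall (DD : Type) FF, ~ holds DD FF s A -> ~ holds DD FF t X.
Proof.
  intros A s p X t H; induction H; intros DD FF Hn; auto.
  - apply IHocc_in. unfold holds in *; simpl in *; tauto.
  - apply IHocc_in. unfold holds in *; simpl in *; tauto.
  - apply IHocc_in. unfold holds in *; destruct s; simpl in *; tauto.
Qed.

Lemma neg_true : forall D F G p X, neg_occ G p X -> ~ Tsat D F G -> Tsat D F X.
Proof.
  intros. apply NNPP. intro. apply (occ_sem _ _ _ _ _ H D F); simpl; auto.
Qed.

Lemma pos_false : forall D F G p X, pos_occ G p X -> ~ Tsat D F G -> ~ Tsat D F X.
Proof.
  intros. intro. apply (occ_sem _ _ _ _ _ H D F); simpl; auto.
Qed.

Lemma closed_valid : forall G, closed_form G -> T_valid G.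
Proof.
  intros G (B & p & q & H1 & H2 & _) D d F. apply NNPP; intro Hn.
  apply (pos_false _ _ _ _ _ H1 Hn). apply (neg_true _ _ _ _ _ H2 Hn).
Qed.

Lemma tab_sound : forall G, has_closed_tableau G -> T_valid G.
Proof.
  intros G H; induction H; intros D d F; apply NNPP; intro Hn.
  - apply Hn, closed_valid; auto.
  - pose proof (neg_true _ _ _ _ _ H Hn). simpl in H2.
    specialize (IHhas_closed_tableau1 D d F). specialize (IHhas_closed_tableau2 D d F).
    simpl in *; tauto.
  - pose proof (neg_true _ _ _ _ _ H Hn) as [[x [Ha Hb]] Hu].
    destruct (IHhas_closed_tableau D d F) as [?|H9]; [tauto|]. apply H9.
    split; eauto.
  - pose proof (neg_true _ _ _ _ _ H Hn) as [[x [Ha Hb]] Hu].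
    pose proof (neg_true _ _ _ _ _ H0 Hn) as [[y [Hb' Hc]] Hu'].
    destruct (IHhas_closed_tableau D d F) as [?|H9]; [tauto|]. apply H9.
    split; auto. exists x; split; auto. assert (x = y) by (apply Hu'; auto). subst; auto.
  - pose proof (neg_true _ _ _ _ _ H Hn) as [[x [Ha Hb]] Hu].
    pose proof (neg_true _ _ _ _ _ H0 Hn) as [[y [Hb' Hc]] Hu'].
    destruct (IHhas_closed_tableau D d F) as [?|H9]; [tauto|]. apply H9.
    split; eauto.
Qed.

Section Model.
Variable N : name -> name -> Prop.
Hypothesis R1 : forall a b, N a b -> N a a.
Hypothesis R2 : forall a b c, N a b -> N b c -> N a c.
Hypothesis R3 : forall a b, N a b -> N b b -> N b a.

Definition MD : Type := ((name -> Prop) + (name * bool))%type.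
Definition MF (a : name) (d : MD) : Prop :=
  match d with
  | inl c => exists x, N x x /\ c = N x /\ N x a
  | inr (a', _) => a' = a /\ ~ N a a
  end.

Lemma model_eps : forall a b, Tsat MD MF (Eps a b) <-> N a b.
Proof.
  intros a b; simpl; split.
  - intros [[d [Ha Hb]] Hu].
    destruct (classic (N a a)) as [Haa|Haa].
    + destruct d as [c|[a' bb]]; simpl in *.
      * destruct Ha as (x & Hxx & -> & Hxa). destruct Hb as (y & Hyy & Heq & Hyb).
        assert (Nxy : N x y) by (rewrite Heq; auto).
        apply R2 with y; auto. apply R2 with x; auto.
      * tauto.
    + exfalso. assert (inr (a, true) = (inr (a, false) : MD)) by (apply Hu; simpl; tauto).
      discriminate.
  - intros Hab. split.
    + exists (inl (N a)); simpl; split; exists a; eauto.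
    + assert (forall d, MF a d -> d = inl (N a)).
      { intros [c|[a' bb]]; simpl.
        - intros (x & Hxx & -> & Hxa). f_equal.
          assert (Hax : N a x) by (apply R3; eauto).
          apply functional_extensionality; intro z; apply propositional_extensionality;
          split; intro; eauto. 
        - intros [_ H]; exfalso; eauto. }
      intros x y [Hx Hy]; rewrite (H x Hx), (H y Hy); auto.
Qed.
End Model.

Lemma model_exists : forall N : name -> name -> Prop,
  (forall a b, N a b -> N a a) ->
  (forall a b c, N a b -> N b c -> N a c) ->
  (forall a b, N a b -> N b b -> N b a) ->
  exists (D : Type) (d : D) (F : name -> D -> Prop), forall a b, Tsat D F (Eps a b) <-> N a b.
Proof.
  intros N R1 R2 R3. exists MD, (inr (0, true)), (MF N). apply model_eps; auto.
Qed.

Lemma hint_model : forall H, hintikka H ->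
  exists (D : Type) (d : D) (F : name -> D -> Prop),
    ~ Tsat D F H /\ forall a b, Tsat D F (Eps a b) <-> neg_part H (Eps a b).
Proof.
  intros H (Hc & H2 & H3 & H4 & H5).
  destruct (model_exists (fun a b => neg_part H (Eps a b))) as (D & d & F & HF); eauto.
  exists D, d, F. split; auto.
  assert (forall X, (pos_part H X -> ~ Tsat D F X) /\ (neg_part H X -> Tsat D F X)).
  { induction X as [a b|B IHB C IHC|B IHB].
    - split.
      + intros [p Hp] Ht. apply HF in Ht. destruct Ht as [q Hq]. apply Hc.
        exists (Eps a b), p, q. split; [auto|split; [auto|]].
        apply (atom_nonoverlap H p q a b a b true false); auto. right; discriminate.
      + intro Hn; apply HF; auto.
    - split.
      + intros [p Hp]. simpl.
        assert (pos_part H B).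
        { exists (p ++ [0]). eapply occ_app; [apply Hp|]. repeat constructor. }
        assert (pos_part H C).
        { exists (p ++ [1]). eapply occ_app; [apply Hp|]. repeat constructor. }
        destruct IHB, IHC; tauto.
      + intros Hn. destruct (H2 _ _ Hn); simpl; [left|right]; firstorder.
    - split.
      + intros [p Hp]. simpl.
        assert (neg_part H B).
        { exists (p ++ [0]). eapply occ_app; [apply Hp|]. repeat constructor. }
        destruct IHB; tauto.
      + intros [p Hp]. simpl.
        assert (pos_part H B).
        { exists (p ++ [0]). eapply occ_app; [apply Hp|]. repeat constructor. }
        destruct IHB; tauto. }
  apply (H0 H). exists []; constructor.
Qed.

Fixpoint beval (w : name -> name -> bool) (A : form) : bool :=
  match A with
  | Eps a b => w a b
  | Or A B => beval w A || beval w B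
  | Not A => negb (beval w A)
  end.

Fixpoint enc (A : form) : pform :=
  match A with
  | Eps a b => PVar (to_nat (a, b))
  | Or A B => POr (enc A) (enc B)
  | Not A => PNot (enc A)
  end.

Definition sfun (n : nat) : form := let (a, b) := of_nat n in Eps a b.

Lemma taut_of : forall A, (forall w, beval w A = true) -> taut_instance A.
Proof.
  intros A HA. exists (enc A), sfun. split.
  - intro v. rewrite <- (HA (fun a b => v (to_nat (a, b)))).
    clear HA; induction A; simpl; auto; [rewrite IHA1, IHA2|rewrite IHA]; auto.
  - clear HA; induction A; simpl; try congruence. unfold sfun. pose proof (cancel_of_to (n, n0)) as E. simpl in E |- *. rewrite E. auto.
Qed.

Definition bdec (P : Prop) : bool := if excluded_middle_informative P then true else false.
Lemma bdec_true : forall P, bdec P = true <-> P.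
Proof. intros; unfold bdec; destruct (excluded_middle_informative P); split; auto; discriminate. Qed.

Lemma pinst_sem : forall D F s P,
  Tsat D F (pinst s P) <-> peval (fun n => bdec (Tsat D F (s n))) P = true.
Proof.
  induction P; simpl.
  - rewrite bdec_true; tauto.
  - rewrite orb_true_iff; tauto.
  - rewrite negb_true_iff, <- not_true_iff_false; tauto.
Qed.

Lemma H_sound : forall A, H_provable A -> T_valid A.
Proof.
  intros A H; induction H; intros D d F; simpl.
  - destruct H as (P & s & HP & ->). apply pinst_sem, HP.
  - destruct (classic (Tsat D F (Eps a b))) as [[[x [? ?]] Hu]|]; [right|left; auto].
    split; eauto. 
  - apply NNPP; intros Hn. apply Hn; right. 
    assert (Hab : Tsat D F (Eps a b)) by (apply NNPP; intro; apply Hn; left; tauto).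
    assert (Hbc : Tsat D F (Eps b c)) by (apply NNPP; intro; apply Hn; left; tauto).
    destruct Hab as [[x [Ha Hb]] Hu]. destruct Hbc as [[y [Hb' Hc]] Hu'].
    split; auto. exists x; split; auto. assert (x = y) by (apply Hu'; auto). subst; auto.
  - apply NNPP; intros Hn. apply Hn; right. 
    assert (Hab : Tsat D F (Eps a b)) by (apply NNPP; intro; apply Hn; left; tauto).
    assert (Hbb : Tsat D F (Eps b b)) by (apply NNPP; intro; apply Hn; left; tauto).
    destruct Hab as [[x [Ha Hb]] Hu]. destruct Hbb as [_ Hu'].
    split; eauto.
  - specialize (IHH_provable1 D d F). specialize (IHH_provable2 D d F). simpl in *; tauto.
Qed.

Fixpoint names (A : form) : list name :=
  match A with
  | Eps a b => [a; b]
  | Or A B => names A ++ names B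
  | Not A => names A
  end.

Lemma agree : forall D F w A,
  (forall a b, In a (names A) -> In b (names A) -> (w a b = true <-> Tsat D F (Eps a b))) ->
  (beval w A = true <-> Tsat D F A).
Proof.
  induction A; simpl; intros Hw.
  - apply Hw; simpl; auto.
  - rewrite orb_true_iff, IHA1, IHA2; [tauto| |]; intros; apply Hw; apply in_or_app; auto.
  - rewrite negb_true_iff, <- not_true_iff_false, IHA; [tauto|auto].
Qed.

Fixpoint impchain (Ls : list form) (A : form) : form :=
  match Ls with [] => A | X :: Ls => Imp X (impchain Ls A) end.

Lemma impchain_prov : forall Ls A, H_provable (impchain Ls A) ->
  (forall X, In X Ls -> H_provable X) -> H_provable A.
Proof.
  induction Ls; simpl; intros; auto.
  apply IHLs; auto. eapply H_mp; eauto.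
Qed.

Lemma impchain_taut : forall Ls A w,
  ((forall X, In X Ls -> beval w X = true) -> beval w A = true) ->
  beval w (impchain Ls A) = true.
Proof.
  induction Ls; simpl; intros; auto.
  destruct (beval w a) eqn:E; simpl; auto.
  apply IHLs; intros; apply H; intros X [<-|?]; auto.
Qed.

Definition axlist (S : list name) : list form :=
  flat_map (fun a => flat_map (fun b =>
     Imp (Eps a b) (Eps a a) ::
     Imp (And (Eps a b) (Eps b b)) (Eps b a) ::
     map (fun c => Imp (And (Eps a b) (Eps b c)) (Eps a c)) S) S) S.

Lemma axlist_prov : forall S X, In X (axlist S) -> H_provable X.
Proof.
  intros S X H. unfold axlist in H. apply in_flat_map in H. destruct H as (a & _ & H1).
  apply in_flat_map in H1. destruct H1 as (b & _ & H2). simpl in H2.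
  destruct H2 as [<-|[<-|H3]]; [apply H_ax1|apply H_ax3|].
  apply in_map_iff in H3. destruct H3 as (c & <- & _). apply H_ax2.
Qed.

Lemma axlist_in1 : forall S a b, In a S -> In b S -> In (Imp (Eps a b) (Eps a a)) (axlist S).
Proof.
  intros. unfold axlist. apply in_flat_map. exists a; split; auto.
  apply in_flat_map. exists b; split; simpl; auto.
Qed.
Lemma axlist_in3 : forall S a b, In a S -> In b S ->
  In (Imp (And (Eps a b) (Eps b b)) (Eps b a)) (axlist S).
Proof.
  intros. unfold axlist. apply in_flat_map. exists a; split; auto.
  apply in_flat_map. exists b; split; simpl; auto.
Qed.
Lemma axlist_in2 : forall S a b c, In a S -> In b S -> In c S ->
  In (Imp (And (Eps a b) (Eps b c)) (Eps a c)) (axlist S).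
Proof.
  intros. unfold axlist. apply in_flat_map. exists a; split; auto.
  apply in_flat_map. exists b; split; simpl; auto. right; right.
  apply in_map_iff. exists c; auto.
Qed.

Lemma H_complete : forall A, T_valid A -> H_provable A.
Proof.
  intros A HV. set (S := names A).
  apply (impchain_prov (axlist S) A); [|apply axlist_prov].
  apply H_taut, taut_of. intro w. apply impchain_taut. intros Hax.
  set (N := fun a b => In a S /\ In b S /\ w a b = true).
  destruct (model_exists N) as (D & d & F & HF).
  - intros a b (Ha & Hb & Hw). pose proof (Hax _ (axlist_in1 S a b Ha Hb)) as E.
    simpl in E. rewrite Hw in E. simpl in E. split; auto.
  - intros a b c (Ha & Hb & Hw) (_ & Hc & Hw'). pose proof (Hax _ (axlist_in2 S a b c Ha Hb Hc)) as E.
    simpl in E. rewrite Hw, Hw' in E. simpl in E. split; auto.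
  - intros a b (Ha & Hb & Hw) (_ & _ & Hw'). pose proof (Hax _ (axlist_in3 S a b Ha Hb)) as E.
    simpl in E. rewrite Hw, Hw' in E. simpl in E. split; auto.
  - apply (agree D F). 
    + intros a b Ha Hb. rewrite HF. unfold N. tauto.
    + apply HV; auto.
Qed.

Lemma subs_names : forall A a b, In (Eps a b) (subs A) -> In a (names A) /\ In b (names A).
Proof.
  induction A; simpl; intros a b H.
  - destruct H as [H|[]]; inversion H; subst; auto.
  - destruct H as [H|H]; [discriminate|]. apply in_app_or in H as [H|H].
    + destruct (IHA1 _ _ H); split; apply in_or_app; auto.
    + destruct (IHA2 _ _ H); split; apply in_or_app; auto.
  - destruct H as [H|H]; [discriminate|]. auto.
Qed.

Definition U0 (A0 : form) : list form :=
  subs A0 ++ map (fun pr => Eps (fst pr) (snd pr)) (list_prod (names A0) (names A0)).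

Lemma U0_closed : forall A0 X Y, In X (U0 A0) -> In Y (subs X) -> In Y (U0 A0).
Proof.
  unfold U0; intros A0 X Y HX HY. apply in_app_or in HX as [HX|HX]; apply in_or_app.
  - left; eapply subs_trans; eauto.
  - right. apply in_map_iff in HX as ([a b] & <- & Hp). simpl in HY.
    destruct HY as [<-|[]]. apply in_map_iff. exists (a, b); auto.
Qed.

Lemma U0_eps : forall A0 a b, In (Eps a b) (U0 A0) -> In a (names A0) /\ In b (names A0).
Proof.
  unfold U0; intros A0 a b H. apply in_app_or in H as [H|H].
  - apply subs_names; auto.
  - apply in_map_iff in H as ([x y] & E & Hp). simpl in E. inversion E; subst.
    apply in_prod_iff in Hp; auto.
Qed.

Lemma U0_eps_in : forall A0 a b, In a (names A0) -> In b (names A0) -> In (Eps a b) (U0 A0).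
Proof.
  unfold U0; intros. apply in_or_app; right. apply in_map_iff. exists (a, b); split; auto.
  apply in_prod; auto.
Qed.

Definition count (U : list form) (G : form) : nat :=
  length (filter (fun X => negb (bdec (neg_part G X))) U).

Lemma filter_le : forall (l : list form) (f g : form -> bool),
  (forall x, g x = true -> f x = true) -> length (filter g l) <= length (filter f l).
Proof.
  induction l; simpl; intros; auto.
  specialize (IHl f g H). specialize (H a).
  destruct (g a), (f a); simpl; try lia; discriminate (H eq_refl).
Qed.

Lemma filter_lt : forall (l : list form) (f g : form -> bool) x0,
  (forall x, g x = true -> f x = true) -> In x0 l -> f x0 = true -> g x0 = false ->
  length (filter g l) < length (filter f l).
Proof.
  induction l; simpl; intros f g x0 H Hin Hf Hg; [contradiction|].
  destruct Hin as [<-|Hin].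
  - rewrite Hf, Hg; simpl. pose proof (filter_le l f g H); lia.
  - pose proof (IHl f g x0 H Hin Hf Hg). specialize (H a).
    destruct (g a), (f a); simpl; try lia; discriminate (H eq_refl).
Qed.

Lemma neg_mono : forall G Z X, neg_part G X -> neg_part (Or G Z) X.
Proof. intros G Z X [p Hp]. exists (0 :: p). constructor; auto. Qed.

Lemma count_child : forall U G X, In X U -> ~ neg_part G X ->
  count U (Or G (Not X)) < count U G.
Proof.
  intros. unfold count. apply filter_lt with X; auto.
  - intros Y. rewrite !negb_true_iff. intros E.
    destruct (bdec (neg_part G Y)) eqn:E2; auto.
    apply (proj1 (bdec_true _)) in E2. apply (neg_mono G (Not X)) in E2.
    apply (proj2 (bdec_true _)) in E2. congruence.
  - rewrite negb_true_iff. destruct (bdec (neg_part G X)) eqn:E2; auto.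
    apply (proj1 (bdec_true _)) in E2; tauto.
  - rewrite negb_false_iff. apply bdec_true. exists [1; 0]. repeat constructor.
Qed.

Definition Inv (U : list form) (G : form) : Prop := forall X, neg_part G X -> In X U.

Lemma inv_child : forall A0 G X, Inv (U0 A0) G -> In X (U0 A0) -> Inv (U0 A0) (Or G (Not X)).
Proof.
  intros A0 G X HI HX Y [p Hp]. apply occ_or_inv in Hp as [(_ & _ & E)|[[p' Hp']|[p' Hp']]].
  - discriminate.
  - apply HI; exists p'; auto.
  - inversion Hp'; subst.
    match goal with Hx : occ_in X _ _ _ _ |- _ => apply occ_sub in Hx end.
    eapply U0_closed; eauto.
Qed.

Lemma valid_child : forall G Z, T_valid G -> T_valid (Or G Z).
Proof. intros G Z H D d F; left; exact (H D d F). Qed.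

Lemma tab_complete_aux : forall A0 k G, count (U0 A0) G = k -> Inv (U0 A0) G -> T_valid G ->
  has_closed_tableau G.
Proof.
  intros A0 k. induction k as [k IH] using (well_founded_induction lt_wf).
  intros G Hk HI HV.
  assert (Hch : forall X, In X (U0 A0) -> ~ neg_part G X -> has_closed_tableau (Or G (Not X))).
  { intros X HX HnX. apply (IH (count (U0 A0) (Or G (Not X)))); auto.
    - subst; apply count_child; auto.
    - apply inv_child; auto.
    - apply valid_child; auto. }
  destruct (classic (closed_form G)) as [Hc|Hc]; [apply tab_leaf; auto|].
  destruct (classic (exists B C, neg_part G (Or B C) /\ ~ neg_part G B /\ ~ neg_part G C))
    as [(B & C & [p Hp] & HB & HC)|H2].
  { assert (HU : In (Or B C) (U0 A0)) by (apply HI; exists p; auto).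
    apply tab_or with p B C; auto; apply Hch; auto; apply (U0_closed _ _ _ HU); simpl; right;
    apply in_or_app; [left|right]; apply subs_refl. }
  destruct (classic (exists a b, neg_part G (Eps a b) /\ ~ neg_part G (Eps a a)))
    as [(a & b & [p Hp] & Ha)|H3].
  { assert (HU : In (Eps a b) (U0 A0)) by (apply HI; exists p; auto).
    apply U0_eps in HU as [Ha' Hb'].
    apply (tab_eps1 G p a b); auto. apply Hch; auto. apply U0_eps_in; auto. }
  destruct (classic (exists a b c, neg_part G (Eps a b) /\ neg_part G (Eps b c) /\
                       ~ neg_part G (Eps a c)))
    as [(a & b & c & [p Hp] & [q Hq] & Hac)|H4].
  { assert (HU : In (Eps a b) (U0 A0)) by (apply HI; exists p; auto).
    assert (HU' : In (Eps b c) (U0 A0)) by (apply HI; exists q; auto).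
    apply U0_eps in HU as [Ha' Hb']. apply U0_eps in HU' as [_ Hc'].
    destruct (classic (Eps a b = Eps b c)) as [E|E].
    - inversion E; subst. exfalso; apply Hac; exists p; auto.
    - apply (tab_eps2 G p q a b c); auto.
      + apply (atom_nonoverlap G p q a b b c false false); auto.
      + apply Hch; auto. apply U0_eps_in; auto. }
  destruct (classic (exists a b, neg_part G (Eps a b) /\ neg_part G (Eps b b) /\
                       ~ neg_part G (Eps b a)))
    as [(a & b & [p Hp] & [q Hq] & Hba)|H5].
  { assert (HU : In (Eps a b) (U0 A0)) by (apply HI; exists p; auto).
    apply U0_eps in HU as [Ha' Hb'].
    destruct (classic (Eps a b = Eps b b)) as [E|E].
    - inversion E; subst. exfalso; apply Hba; exists p; auto.
    - apply (tab_eps3b G p q a b); auto.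
      + apply (atom_nonoverlap G p q a b b b false false); auto.
      + apply Hch; auto. apply U0_eps_in; auto. }
  exfalso.
  assert (Hh : hintikka G).
  { split; [auto|]. split; [|split; [|split]].
    - intros B C H; apply NNPP; intro; apply H2; exists B, C; tauto.
    - intros a b H; apply NNPP; intro; apply H3; exists a, b; tauto.
    - intros a b c H H'; apply NNPP; intro; apply H4; exists a, b, c; tauto.
    - intros a b H H'; apply NNPP; intro; apply H5; exists a, b; tauto. }
  destruct (hint_model G Hh) as (D & d & F & Hn & _). apply Hn, HV; auto.
Qed.

Lemma tab_complete : forall A, T_valid A -> has_closed_tableau A.
Proof.
  intros A HV. apply (tab_complete_aux A _ A eq_refl); auto.
  intros X [p Hp]. apply occ_sub in Hp. unfold U0; apply in_or_app; auto.
Qed.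

Lemma nsubst_sem : forall D F s B, Tsat D F (nsubst s B) <-> Tsat D (fun n => F (s n)) B.
Proof. induction B; simpl; try tauto. Qed.

Lemma R_sound : forall a0 A, H_rejected a0 A -> ~ T_valid A.
Proof.
  intros a0 A H; induction H; intro HV.
  - specialize (HV unit tt (fun _ _ => False)). simpl in HV. destruct HV as [[_ [[] _]] _].
  - specialize (HV unit tt (fun _ _ => True)). simpl in HV. apply HV. split.
    + exists tt; auto.
    + intros [] []; auto.
  - apply IHH_rejected. intros D d F. destruct (H_sound _ H D d F); [|auto].
    exfalso; apply H1; exact (HV D d F).
  - apply IHH_rejected. subst. intros D d F. apply nsubst_sem. exact (HV _ d _).
  - destruct (hint_model A H) as (D & d & F & Hn & HF).
    destruct (HV D d F) as [?|Hab]; [tauto|]. apply HF in Hab. tauto.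
Qed.

Fixpoint leaves (A : form) : list form :=
  match A with Or A B => leaves A ++ leaves B | X => [X] end.

Lemma beval_leaves : forall w A, beval w A = existsb (beval w) (leaves A).
Proof.
  induction A; simpl; try (rewrite orb_false_r; auto).
  rewrite existsb_app, IHA1, IHA2; auto.
Qed.

Lemma leaves_fold : forall ls c, leaves (fold_left Or ls c) = leaves c ++ concat (map leaves ls).
Proof.
  induction ls; simpl; intros; [rewrite app_nil_r; auto|].
  rewrite IHls; simpl. rewrite app_assoc; auto.
Qed.

Lemma leaves_nsubst : forall s A, leaves (nsubst s A) = map (nsubst s) (leaves A).
Proof. induction A; simpl; auto. rewrite map_app, IHA1, IHA2; auto. Qed.

Lemma ld_neg : forall C, literal_disj C -> forall p X, occ_in C true p X false ->
  exists a b, X = Eps a b /\ In (Not (Eps a b)) (leaves C).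
Proof.
  intros C H; induction H; intros p X Ho; inversion Ho; subst.
  - match goal with Hx : occ_in (Eps _ _) _ _ _ _ |- _ => apply occ_eps in Hx; destruct Hx as (_ & -> & _) end.
    exists a, b; simpl; auto.
  - match goal with Hx : occ_in A _ _ _ _ |- _ => destruct (IHliteral_disj1 _ _ Hx) as (a & b & -> & Hi) end.
    exists a, b; simpl; split; auto. apply in_or_app; auto.
  - match goal with Hx : occ_in B _ _ _ _ |- _ => destruct (IHliteral_disj2 _ _ Hx) as (a & b & -> & Hi) end.
    exists a, b; simpl; split; auto. apply in_or_app; auto.
Qed.

Lemma ld_neg_in : forall C, literal_disj C -> forall a b,
  In (Not (Eps a b)) (leaves C) -> neg_part C (Eps a b).
Proof.
  intros C H; induction H; simpl; intros x y Hi.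
  - destruct Hi as [E|[]]; discriminate.
  - destruct Hi as [E|[]]; inversion E; subst. exists [0]; repeat constructor.
  - apply in_app_or in Hi as [Hi|Hi].
    + destruct (IHliteral_disj1 _ _ Hi) as [p Hp]. exists (0 :: p); constructor; auto.
    + destruct (IHliteral_disj2 _ _ Hi) as [p Hp]. exists (1 :: p); constructor; auto.
Qed.

Lemma ld_pos : forall C, literal_disj C -> forall p a b, occ_in C true p (Eps a b) true ->
  In (Eps a b) (leaves C).
Proof.
  intros C H; induction H; intros p x y Ho; inversion Ho; subst; simpl; auto.
  - match goal with Hx : occ_in (Eps _ _) _ _ _ _ |- _ => apply occ_eps in Hx; destruct Hx as (_ & _ & E) end.
    discriminate.
  - apply in_or_app; left; eauto.
  - apply in_or_app; right; eauto.
Qed.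

Lemma ld_fold : forall ls c, literal_disj c -> (forall l, In l ls -> literal_disj l) ->
  literal_disj (fold_left Or ls c).
Proof.
  induction ls; simpl; intros; auto. apply IHls; auto. constructor; auto.
Qed.

Section Rej.
Variable a0 : name.
Variable S : list name.
Variable N : name -> name -> Prop.
Hypothesis R1 : forall a b, N a b -> N a a.
Hypothesis R2 : forall a b c, N a b -> N b c -> N a c.
Hypothesis R3 : forall a b, N a b -> N b b -> N b a.

Definition good (C : form) : Prop :=
  literal_disj C /\
  (forall a b, In (Not (Eps a b)) (leaves C) <-> In a S /\ In b S /\ N a b) /\
  (forall a b, In (Eps a b) (leaves C) -> ~ N a b).

Lemma good_hint : forall C, good C -> hintikka C.
Proof.
  intros C (Hld & Hn & Hp).
  assert (HN : forall a b, neg_part C (Eps a b) -> In a S /\ In b S /\ N a b).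
  { intros a b [p Hq]. destruct (ld_neg C Hld p _ Hq) as (x & y & E & Hi). inversion E; subst.
    apply Hn; auto. }
  assert (HN' : forall a b, In a S -> In b S -> N a b -> neg_part C (Eps a b)).
  { intros. apply ld_neg_in; auto. apply Hn; auto. }
  split; [|split; [|split; [|split]]].
  - intros (B & p & q & H1 & H2 & _).
    destruct (ld_neg C Hld q _ H2) as (a & b & -> & Hi).
    apply (Hp a b). eapply ld_pos; eauto. apply Hn; auto.
  - intros B C' [p Hq]. destruct (ld_neg C Hld p _ Hq) as (x & y & E & _). discriminate.
  - intros a b H. destruct (HN a b H) as (? & ? & ?). apply HN'; eauto.
  - intros a b c H H'. destruct (HN a b H) as (? & ? & ?). destruct (HN b c H') as (? & ? & ?).
    apply HN'; eauto.
  - intros a b H H'. destruct (HN a b H) as (? & ? & ?). destruct (HN b b H') as (? & ? & ?).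
    apply HN'; eauto.
Qed.

Lemma good_step : forall C a b, good C -> H_rejected a0 C -> ~ N a b ->
  good (Or C (Eps a b)) /\ H_rejected a0 (Or C (Eps a b)).
Proof.
  intros C a b HG HR Hab. split.
  - destruct HG as (Hld & Hn & Hp). split; [constructor; auto; constructor|split].
    + intros x y. simpl. rewrite <- Hn. split; intro H.
      * apply in_app_or in H as [H|[H|[]]]; auto; discriminate.
      * apply in_or_app; auto.
    + intros x y H. simpl in H. apply in_app_or in H as [H|[H|[]]]; eauto.
      inversion H; subst; auto.
  - apply R_hint; auto.
    + apply good_hint; auto.
    + apply HG.
    + intros [p Hq]. destruct HG as (Hld & Hn & _).
      destruct (ld_neg C Hld p _ Hq) as (x & y & E & Hi). inversion E; subst.
      apply Hn in Hi. tauto.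
Qed.

Definition EpsP (pr : name * name) : form := Eps (fst pr) (snd pr).

Lemma good_fold : forall ps C, good C -> H_rejected a0 C ->
  (forall pr, In pr ps -> ~ N (fst pr) (snd pr)) ->
  good (fold_left Or (map EpsP ps) C) /\ H_rejected a0 (fold_left Or (map EpsP ps) C).
Proof.
  induction ps; simpl; intros C HG HR Hps; auto.
  destruct (good_step C (fst a) (snd a)) as [HG' HR']; auto.
Qed.

End Rej.

Lemma existsb_const : forall (f : form -> bool) l v, l <> [] -> (forall x, In x l -> f x = v) ->
  existsb f l = v.
Proof.
  induction l as [|a l IHl]; intros v Hne H; [congruence|]. simpl. rewrite (H a) by (simpl; auto).
  destruct l as [|b l'].
  - simpl; destruct v; auto.
  - rewrite (IHl v); [destruct v; auto|discriminate|intros; apply H; simpl; auto].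
Qed.

Lemma leaves_ne : forall A, leaves A <> [].
Proof. induction A; simpl; try discriminate. destruct (leaves A1); simpl; congruence. Qed.

Lemma names_ne : forall A, names A <> [].
Proof. induction A; simpl; try discriminate; auto. destruct (names A1); simpl; congruence. Qed.

Lemma taut_from_L : forall A L (D : Type) F, ~ Tsat D F A ->
  (forall a b, In a (names A) -> In b (names A) ->
     (Tsat D F (Eps a b) -> In (Not (Eps a b)) (leaves L)) /\
     (~ Tsat D F (Eps a b) -> In (Eps a b) (leaves L))) ->
  H_provable (Imp A L).
Proof.
  intros A L D F HA HL. apply H_taut, taut_of. intro w. simpl.
  destruct (beval w L) eqn:EL; [rewrite orb_true_r; auto|].
  rewrite orb_false_r, negb_true_iff, <- not_true_iff_false.
  rewrite (agree D F); auto.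
  intros a b Ha Hb. rewrite beval_leaves in EL.
  assert (Hf : forall l, In l (leaves L) -> beval w l = false).
  { intros l Hl. destruct (beval w l) eqn:E; auto.
    rewrite <- EL. symmetry; apply existsb_exists; eauto. }
  destruct (HL a b Ha Hb) as [H1 H2].
  destruct (classic (Tsat D F (Eps a b))) as [Ht|Ht].
  - pose proof (Hf _ (H1 Ht)). simpl in H. rewrite negb_false_iff in H. tauto.
  - pose proof (Hf _ (H2 Ht)). simpl in H. split; intro; [congruence|tauto].
Qed.

Lemma sem_R1 : forall D F a b, Tsat D F (Eps a b) -> Tsat D F (Eps a a).
Proof. intros D F a b [[x [Ha Hb]] Hu]. split; eauto. Qed.
Lemma sem_R2 : forall D F a b c, Tsat D F (Eps a b) -> Tsat D F (Eps b c) -> Tsat D F (Eps a c).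
Proof.
  intros D F a b c [[x [Ha Hb]] Hu] [[y [Hb' Hc]] Hu'].
  split; auto. exists x; split; auto. assert (x = y) by (apply Hu'; auto). subst; auto.
Qed.
Lemma sem_R3 : forall D F a b, Tsat D F (Eps a b) -> Tsat D F (Eps b b) -> Tsat D F (Eps b a).
Proof. intros D F a b [[x [Ha Hb]] Hu] [_ Hu']. split; eauto. Qed.

Definition NotP (pr : name * name) : form := Not (EpsP pr).

Lemma concat_EpsP : forall l, concat (map leaves (map EpsP l)) = map EpsP l.
Proof. induction l; simpl; auto. rewrite IHl; auto. Qed.
Lemma concat_NotP : forall l, concat (map leaves (map NotP l)) = map NotP l.
Proof. induction l; simpl; auto. rewrite IHl; auto. Qed.

Lemma rej_complete : forall a0 A, ~ T_valid A -> H_rejected a0 A.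
Proof.
  intros a0 A HV.
  assert (Hex : exists (D : Type) (d : D) F, ~ Tsat D F A).
  { apply NNPP; intro H; apply HV; intros D d F; apply NNPP; intro; apply H; eauto. }
  destruct Hex as (D & d & F & HA).
  set (N := fun a b => Tsat D F (Eps a b)).
  assert (R1 : forall a b, N a b -> N a a) by (intros; eapply sem_R1; eauto).
  assert (R2 : forall a b c, N a b -> N b c -> N a c) by (intros; eapply sem_R2; eauto).
  assert (R3 : forall a b, N a b -> N b b -> N b a) by (intros; eapply sem_R3; eauto).
  set (S := names A). set (P := list_prod S S).
  set (dN := fun pr : name * name => bdec (N (fst pr) (snd pr))).
  remember (filter dN P) as NP eqn:ENP.
  remember (filter (fun pr => negb (dN pr)) P) as PP eqn:EPP.
  assert (HNP : forall a b, In (a, b) NP <-> In a S /\ In b S /\ N a b).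
  { intros a b. subst NP. unfold P. rewrite filter_In, in_prod_iff. unfold dN; simpl.
    rewrite bdec_true. tauto. }
  assert (HPP : forall pr, In pr PP -> ~ N (fst pr) (snd pr)).
  { intros pr H. subst PP. apply filter_In in H as [_ H]. unfold dN in H.
    rewrite negb_true_iff, <- not_true_iff_false, bdec_true in H. auto. }
  assert (HPP' : forall a b, In a S -> In b S -> ~ N a b -> In (a, b) PP).
  { intros a b Ha Hb Hn. subst PP. apply filter_In. split; [apply in_prod; auto|].
    unfold dN; simpl. rewrite negb_true_iff, <- not_true_iff_false, bdec_true. auto. }
  assert (HL : exists L, good S N L /\ H_rejected a0 L /\
                 (forall pr, In pr PP -> In (EpsP pr) (leaves L))).
  { destruct NP as [|pr0 rest].
    - destruct PP as [|q0 qs].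
      + exfalso. destruct S as [|s0 S'] eqn:ES; [apply (names_ne A); auto|].
        destruct (classic (N s0 s0)) as [Hs|Hs].
        * apply (HNP s0 s0). simpl; auto.
        * apply (HPP' s0 s0); simpl; auto.
      + assert (HG : good S N (EpsP q0)).
        { split; [constructor|split].
          - intros a b; simpl; split; [intros [E|[]]; discriminate|].
            intro H; apply HNP in H; destruct H.
          - intros a b [E|[]]. destruct q0; inversion E; subst. apply (HPP (a, b)); simpl; auto. }
        assert (HR : H_rejected a0 (EpsP q0)).
        { apply (R_subst a0 (Eps a0 a0) (EpsP q0) (fun _ => a0)); [constructor|auto]. }
        destruct (good_fold a0 S N R1 R2 R3 qs (EpsP q0)) as [HG' HR']; auto.
        { intros; apply HPP; simpl; auto. }
        eexists; split; [apply HG'|split; [apply HR'|]].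
        intros pr Hpr. rewrite leaves_fold, concat_EpsP. simpl. simpl in Hpr.
        destruct Hpr as [<-|Hpr]; auto. right; apply in_map; auto.
    - set (C0 := fold_left Or (map NotP rest) (NotP pr0)).
      assert (HLC : leaves C0 = map NotP (pr0 :: rest)).
      { unfold C0. rewrite leaves_fold, concat_NotP. auto. }
      assert (HG : good S N C0).
      { split; [|split].
        - apply ld_fold; [constructor|]. intros l Hl; apply in_map_iff in Hl as (pr & <- & _).
          constructor.
        - intros a b. rewrite HLC, <- HNP. rewrite in_map_iff. split.
          + intros (pr & E & Hpr). destruct pr; inversion E; subst; auto.
          + intro H; exists (a, b); auto.
        - intros a b. rewrite HLC, in_map_iff. intros (pr & E & _). discriminate. }
      assert (HR : H_rejected a0 C0).
      { apply (R_subst a0 (nsubst (fun _ => a0) C0) C0 (fun _ => a0)); [|auto].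
        apply (R_mp a0 _ (Not (Eps a0 a0))); [|constructor].
        apply H_taut, taut_of. intro w. simpl.
        rewrite beval_leaves, leaves_nsubst, HLC.
        rewrite (existsb_const _ _ (negb (w a0 a0))).
        - destruct (w a0 a0); auto.
        - discriminate.
        - intros x Hx. rewrite map_map in Hx. apply in_map_iff in Hx as (pr & <- & _). auto. }
      destruct (good_fold a0 S N R1 R2 R3 PP C0) as [HG' HR']; auto.
      eexists; split; [apply HG'|split; [apply HR'|]].
      intros pr Hpr. rewrite leaves_fold, concat_EpsP. apply in_or_app; right; apply in_map; auto. }
  destruct HL as (L & HG & HR & HC).
  apply (R_mp a0 A L); auto.
  apply (taut_from_L A L D F HA). intros a b Ha Hb. split.
  - intro Ht. apply HG. fold S in Ha, Hb. auto.
  - intro Ht. apply (HC (a, b)). apply HPP'; auto.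
Qed.

Theorem theorem6p2 (a0 : name) (A : form) :
  (T_provable A <-> H_provable A) /\
  (H_provable A <-> T_valid A) /\
  (T_valid A <-> ~ H_rejected a0 A).
Proof.
  unfold T_provable. split; [|split].
  - split; intro H.
    + apply H_complete, tab_sound; auto.
    + apply tab_complete, H_sound; auto.
  - split; [apply H_sound|apply H_complete].
  - split.
    + intros HV HR. exact (R_sound a0 A HR HV).
    + intros HR. apply NNPP; intro HV. apply HR, rej_complete; auto.
Qed.
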